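(* Let $X\in\mathcal{Y}$ be a Banach space with $\dim X>1$ and let $(x_n)_{n\in\mathbb{Z}_+}$ be a sequence in $X$ for which there is a non-zero $u\in X^*$ with $|u(x_n)|=O(n^{-1}\|x_n\|)$ as $n\to\infty$. Then the weak closure of $\Omega=\{zx_n:z\in\mathbb{K},\ n\in\mathbb{Z}_+\}$ is norm nowhere dense in $X$. In particular, $\Omega$ is not weakly dense in $X$.
   Context: $\mathbb{K}\in\{\mathbb{R},\mathbb{C}\}$ is the scalar field. $\mathcal{Y}$ is the class of Banach spaces $X$ such that for every sequence $(x_n)_{n\in\mathbb{Z}_+}$ in $X$ with $n=O(\|x_n\|)$ as $n\to\infty$, the set $\{x_n:n\in\mathbb{Z}_+\}$ is weakly closed. *)

(* Defs.v *)
From Stdlib Require Import Reals List.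
Open Scope R_scope.

Record Scalar := {
  sc :> Type;
  s0 : sc;
  s1 : sc;
  sadd : sc -> sc -> sc;
  sopp : sc -> sc;
  smul : sc -> sc -> sc;
  sabs : sc -> R
}.

Definition R_scalar : Scalar :=
  {| sc := R; s0 := 0; s1 := 1; sadd := Rplus; sopp := Ropp; smul := Rmult;
     sabs := Rabs |}.

(* complex numbers as pairs (re, im) *)
Definition Cc := (R * R)%type.
Definition Cadd (z w : Cc) : Cc := (fst z + fst w, snd z + snd w).
Definition Copp (z : Cc) : Cc := (- fst z, - snd z).
Definition Cmul (z w : Cc) : Cc :=
  (fst z * fst w - snd z * snd w, fst z * snd w + snd z * fst w).
Definition Cabs (z : Cc) : R := sqrt (fst z * fst z + snd z * snd z).

Definition C_scalar : Scalar :=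
  {| sc := Cc; s0 := (0, 0); s1 := (1, 0); sadd := Cadd; sopp := Copp;
     smul := Cmul; sabs := Cabs |}.

Definition Kfield (complex : bool) : Scalar :=
  if complex then C_scalar else R_scalar.

Record Banach (K : Scalar) := {
  vec :> Type;
  vzero : vec;
  vadd : vec -> vec -> vec;
  vopp : vec -> vec;
  vscale : K -> vec -> vec;
  vnorm : vec -> R;
  vadd_assoc : forall x y z, vadd x (vadd y z) = vadd (vadd x y) z;
  vadd_comm : forall x y, vadd x y = vadd y x;
  vadd_0 : forall x, vadd x vzero = x;
  vadd_opp : forall x, vadd x (vopp x) = vzero;
  vscale_1 : forall x, vscale (s1 K) x = x;
  vscale_assoc : forall a b x, vscale a (vscale b x) = vscale (smul K a b) x;
  vscale_addv : forall a x y, vscale a (vadd x y) = vadd (vscale a x) (vscale a y);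
  vscale_adds : forall a b x, vscale (sadd K a b) x = vadd (vscale a x) (vscale b x);
  vnorm_nonneg : forall x, 0 <= vnorm x;
  vnorm_eq0 : forall x, vnorm x = 0 -> x = vzero;
  vnorm_scale : forall a x, vnorm (vscale a x) = sabs K a * vnorm x;
  vnorm_triangle : forall x y, vnorm (vadd x y) <= vnorm x + vnorm y;
  vcomplete : forall u : nat -> vec,
    (forall eps, 0 < eps -> exists N, forall m n, (N <= m)%nat -> (N <= n)%nat ->
        vnorm (vadd (u m) (vopp (u n))) < eps) ->
    exists l, forall eps, 0 < eps -> exists N, forall n, (N <= n)%nat ->
        vnorm (vadd (u n) (vopp l)) < eps
}.

Arguments vzero {K} _.
Arguments vadd {K} {_} _ _.
Arguments vopp {K} {_} _.
Arguments vscale {K} {_} _ _.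
Arguments vnorm {K} {_} _.

Section Notions.
Variable K : Scalar.
Variable X : Banach K.

Definition in_dual (f : X -> K) : Prop :=
  (forall x y, f (vadd x y) = sadd K (f x) (f y)) /\
  (forall (a : K) x, f (vscale a x) = smul K a (f x)) /\
  (exists M, forall x, sabs K (f x) <= M * vnorm x).

Definition dim_gt1 : Prop :=
  exists x y : X, forall a b : K,
    vadd (vscale a x) (vscale b y) = vzero X -> a = s0 K /\ b = s0 K.

(** weak closure: x is in the weak closure of A iff every basic weak
    neighbourhood {y : |f_i y - f_i x| < eps, i = 1..m}, f_i in X^*, meets A *)
Definition weak_closure (A : X -> Prop) (x : X) : Prop :=
  forall (fs : list (X -> K)) (eps : R),
    Forall in_dual fs -> 0 < eps ->
    exists a, A a /\
      Forall (fun f => sabs K (sadd K (f a) (sopp K (f x))) < eps) fs.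

Definition weakly_closed (A : X -> Prop) : Prop :=
  forall x, weak_closure A x -> A x.

Definition norm_closure (A : X -> Prop) (x : X) : Prop :=
  forall eps, 0 < eps -> exists a, A a /\ vnorm (vadd a (vopp x)) < eps.

Definition norm_nowhere_dense (A : X -> Prop) : Prop :=
  ~ exists (x : X) (r : R), 0 < r /\
      forall y : X, vnorm (vadd y (vopp x)) < r -> norm_closure A y.

End Notions.

Arguments in_dual {K} {X} _.
Arguments dim_gt1 {K} X.
Arguments weak_closure {K} {X} _ _.
Arguments weakly_closed {K} {X} _.
Arguments norm_closure {K} {X} _ _.
Arguments norm_nowhere_dense {K} {X} _.

Definition in_class_Y {K : Scalar} (X : Banach K) : Prop :=
  forall xs : nat -> X,
    (exists (C : R) (N : nat), forall n, (N <= n)%nat -> INR n <= C * vnorm (xs n)) ->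
    weakly_closed (fun y => exists n, y = xs n).

(* Main.v *)
Require Import Defs.
From Stdlib Require Import Reals List Lra Field Ring ClassicalEpsilon Lia.
Open Scope R_scope.

Definition Kinv (c : bool) : Kfield c -> Kfield c :=
  match c return Kfield c -> Kfield c with
  | true => fun z : Cc => (fst z / (fst z * fst z + snd z * snd z),
                          - snd z / (fst z * fst z + snd z * snd z))
  | false => fun r : R => / r
  end.
Definition Ksub c (a b : Kfield c) := sadd (Kfield c) a (sopp (Kfield c) b).
Definition Kdiv c (a b : Kfield c) := smul (Kfield c) a (Kinv c b).

Lemma K_field c : field_theory (s0 (Kfield c)) (s1 (Kfield c)) (sadd (Kfield c)) (smul (Kfield c))
   (Ksub c) (sopp (Kfield c)) (Kdiv c) (Kinv c) eq.
Proof.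
  destruct c.
  - constructor.
    + constructor; simpl; unfold Ksub, Cadd, Cmul, Copp; simpl;
        intros; repeat match goal with z : Cc |- _ => destruct z end; unfold Cadd, Copp; simpl; f_equal; ring.
    + simpl; intro H; inversion H; lra.
    + reflexivity.
    + intros [a b] H; simpl in *; unfold Cmul; simpl.
      assert (a*a+b*b <> 0).
      { intro E. apply H. assert (a = 0) by nra. assert (b = 0) by nra. subst; reflexivity. }
      f_equal; field; auto.
  - constructor.
    + constructor; intros; simpl; unfold Ksub; simpl; ring.
    + simpl; lra.
    + reflexivity.
    + intros p H; simpl in *. field. auto.
Qed.

Definition ofR (c : bool) (r : R) : Kfield c :=
  match c return Kfield c with true => ((r, 0) : Cc) | false => r end.

Lemma kabs0 c : sabs (Kfield c) (s0 (Kfield c)) = 0.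
Proof. destruct c; simpl. - unfold Cabs; simpl. replace (0*0+0*0) with 0 by ring. apply sqrt_0. - apply Rabs_R0. Qed.
Lemma kabs1 c : sabs (Kfield c) (s1 (Kfield c)) = 1.
Proof. destruct c; simpl. - unfold Cabs; simpl. replace (1*1+0*0) with 1 by ring. apply sqrt_1. - apply Rabs_R1. Qed.
Lemma kabs_nonneg c a : 0 <= sabs (Kfield c) a.
Proof. destruct c; simpl. - apply sqrt_pos. - apply Rabs_pos. Qed.
Lemma kabs_eq0 c a : sabs (Kfield c) a = 0 -> a = s0 (Kfield c).
Proof.
  destruct c; simpl.
  - destruct a as [x y]; unfold Cabs; simpl; intro H.
    apply sqrt_eq_0 in H; [|nra]. assert (x = 0) by nra. assert (y = 0) by nra. subst; auto.
  - intro H. destruct (Req_dec a 0); auto. exfalso. apply Rabs_no_R0 in H0. auto.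
Qed.
Lemma kabs_mul c a b : sabs (Kfield c) (smul (Kfield c) a b) = sabs (Kfield c) a * sabs (Kfield c) b.
Proof.
  destruct c; simpl.
  - destruct a as [x y], b as [z w]; unfold Cabs, Cmul; simpl.
    rewrite <- sqrt_mult by nra. f_equal. ring.
  - apply Rabs_mult.
Qed.
Lemma kabs_add c a b : sabs (Kfield c) (sadd (Kfield c) a b) <= sabs (Kfield c) a + sabs (Kfield c) b.
Proof.
  destruct c; simpl.
  - destruct a as [x y], b as [z w]; unfold Cabs, Cadd; simpl.
    pose proof (sqrt_pos (x*x+y*y)). pose proof (sqrt_pos (z*z+w*w)).
    pose proof (sqrt_sqrt (x*x+y*y) ltac:(nra)). pose proof (sqrt_sqrt (z*z+w*w) ltac:(nra)).
    set (p := sqrt (x*x+y*y)) in *. set (q := sqrt (z*z+w*w)) in *.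
    rewrite <- (sqrt_Rsqr (p+q)) by lra. apply sqrt_le_1_alt. unfold Rsqr.
    assert (x*z+y*w <= p*q).
    { destruct (Rle_dec (x*z+y*w) 0). { assert (0 <= p*q) by (apply Rmult_le_pos; auto). lra. }
      assert ((x*z+y*w)*(x*z+y*w) <= (p*q)*(p*q)).
      { replace ((p*q)*(p*q)) with ((p*p)*(q*q)) by ring. rewrite H1, H2. pose proof (Rle_0_sqr (x*w - y*z)). unfold Rsqr in *. nra. }
      assert (0 <= p*q) by (apply Rmult_le_pos; auto).
      destruct (Rle_dec (x*z+y*w) (p*q)); auto. exfalso.
      assert ((p*q)*(p*q) < (x*z+y*w)*(x*z+y*w)) by (apply Rmult_le_0_lt_compat; lra).
      lra. }
    replace ((p+q)*(p+q)) with (p*p + q*q + 2*(p*q)) by ring. rewrite H1, H2. nra.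
  - apply Rabs_triang.
Qed.
Lemma kabs_opp c a : sabs (Kfield c) (sopp (Kfield c) a) = sabs (Kfield c) a.
Proof.
  destruct c; simpl.
  - destruct a as [x y]; unfold Cabs, Copp; simpl. f_equal; ring.
  - apply Rabs_Ropp.
Qed.
Lemma kabs_ofR c r : sabs (Kfield c) (ofR c r) = Rabs r.
Proof.
  destruct c; simpl; auto. unfold Cabs; simpl. replace (r*r+0*0) with (Rsqr r) by (unfold Rsqr; ring).
  apply sqrt_Rsqr_abs.
Qed.
Lemma kabs_ofR_sub c r s : sabs (Kfield c) (sadd (Kfield c) (ofR c r) (sopp (Kfield c) (ofR c s))) = Rabs (r - s).
Proof.
  destruct c; simpl; auto. unfold Cabs, Cadd, Copp; simpl.
  replace ((r + - s) * (r + - s) + (0 + - 0) * (0 + - 0)) with (Rsqr (r - s)) by (unfold Rsqr; ring).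
  apply sqrt_Rsqr_abs.
Qed.

Definition tstep (h : R) (ab : R * R) : R * R :=
  let a := fst ab in let b := snd ab in
  if Rlt_dec h ((a + b) / 2) then (a + 2 * (b - a) / 3, b) else (a, a + (b - a) / 3).

Fixpoint tI (f : nat -> R) (n : nat) : R * R :=
  match n with O => (-1, 1) | S m => tstep (f m) (tI f m) end.

Lemma tI_props f n :
  fst (tI f n) < snd (tI f n) /\ fst (tI f n) <= fst (tI f (S n)) /\ snd (tI f (S n)) <= snd (tI f n)
  /\ fst (tI f (S n)) < snd (tI f (S n))
  /\ (f n < fst (tI f (S n)) \/ snd (tI f (S n)) < f n).
Proof.
  induction n as [|n IH].
  - simpl. unfold tstep; simpl. destruct (Rlt_dec (f 0%nat) ((-1 + 1) / 2)); simpl; lra.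
  - destruct IH as [_ [_ [_ [H _]]]]. change (tI f (S (S n))) with (tstep (f (S n)) (tI f (S n))).
    set (p := tI f (S n)) in *. unfold tstep.
    destruct (Rlt_dec (f (S n)) ((fst p + snd p) / 2)); simpl; lra.
Qed.

Lemma tI_mono f n m : (n <= m)%nat -> fst (tI f n) <= fst (tI f m) /\ snd (tI f m) <= snd (tI f n).
Proof.
  induction 1 as [|m0 Hm IH]. - lra.
  - destruct (tI_props f m0) as [_ [A [B _]]]. lra.
Qed.

Lemma tI_ab f n m : fst (tI f n) <= snd (tI f m).
Proof.
  destruct (tI_mono f n (max n m) ltac:(lia)).
  destruct (tI_mono f m (max n m) ltac:(lia)).
  destruct (tI_props f (max n m)). lra.
Qed.

Lemma avoid (f : nat -> R) : exists x, -1 <= x <= 1 /\ forall n, f n <> x.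
Proof.
  set (E := fun x => exists n, x = fst (tI f n)).
  assert (Hb : bound E).
  { exists 1. intros x [n ->]. apply (tI_ab f n 0). }
  assert (Hne : exists x, E x) by (exists (-1); exists 0%nat; reflexivity).
  destruct (completeness E Hb Hne) as [x [Hub Hlub]].
  assert (Ha : forall n, fst (tI f n) <= x) by (intro n; apply Hub; exists n; auto).
  assert (Hbb : forall m, x <= snd (tI f m)).
  { intro m. apply Hlub. intros y [n ->]. apply tI_ab. }
  exists x. split.
  - split; [apply (Ha 0%nat) | apply (Hbb 0%nat)].
  - intros n E'. destruct (tI_props f n) as [_ [_ [_ [_ H]]]].
    specialize (Ha (S n)). specialize (Hbb (S n)). lra.
Qed.

Section Main.
Variable c : bool.
Add Field KF : (K_field c).
Variable X : Banach (Kfield c).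
Local Notation K := (Kfield c).
Local Notation k0 := (s0 (Kfield c)).
Local Notation k1 := (s1 (Kfield c)).
Local Notation kadd := (sadd (Kfield c)).
Local Notation kmul := (smul (Kfield c)).
Local Notation kopp := (sopp (Kfield c)).
Local Notation kabs := (sabs (Kfield c)).
Local Notation kinv := (Kinv c).
Local Notation ksub := (Ksub c).

Lemma vadd_0l (x : X) : vadd (vzero X) x = x.
Proof. rewrite vadd_comm. apply vadd_0. Qed.

Lemma vopp_uniq (x y : X) : vadd x y = vzero X -> y = vopp x.
Proof.
  intro H. rewrite <- (vadd_0 _ X y). rewrite <- (vadd_opp _ X x).
  rewrite vadd_assoc. rewrite (vadd_comm _ X y x). rewrite H. apply vadd_0l.
Qed.

Lemma vscale_0 (x : X) : vscale k0 x = vzero X.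
Proof.
  assert (E : vscale k0 x = vadd (vscale k0 x) (vscale k0 x)).
  { rewrite <- vscale_adds. f_equal. ring. }
  set (v := vscale k0 x) in *.
  transitivity (vadd (vadd v v) (vopp v)).
  - rewrite <- vadd_assoc, vadd_opp, vadd_0. reflexivity.
  - rewrite <- E. apply vadd_opp.
Qed.

Lemma vnorm0 : vnorm (vzero X) = 0.
Proof.
  rewrite <- (vscale_0 (vzero X)). rewrite vnorm_scale, kabs0. ring.
Qed.

Lemma vopp_scale (x : X) : vopp x = vscale (kopp k1) x.
Proof.
  symmetry. apply vopp_uniq. rewrite <- (vscale_1 _ X x) at 1.
  rewrite <- vscale_adds. replace (kadd k1 (kopp k1)) with k0 by ring. apply vscale_0.
Qed.

Lemma vsub_self (x : X) : vnorm (vadd x (vopp x)) = 0.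
Proof. rewrite vadd_opp. apply vnorm0. Qed.

Lemma vscale_zero a : vscale a (vzero X) = vzero X.
Proof. rewrite <- (vscale_0 (vzero X)), vscale_assoc. f_equal. ring. Qed.

Section Dual.
Variable f : X -> K.
Hypothesis Hf : in_dual f.
Lemma dual_add x y : f (vadd x y) = kadd (f x) (f y).
Proof. apply Hf. Qed.
Lemma dual_scale a x : f (vscale a x) = kmul a (f x).
Proof. apply Hf. Qed.
Lemma dual_opp x : f (vopp x) = kopp (f x).
Proof. rewrite vopp_scale, dual_scale. ring. Qed.
Lemma dual_sub x y : f (vadd x (vopp y)) = kadd (f x) (kopp (f y)).
Proof. rewrite dual_add, dual_opp. reflexivity. Qed.
Lemma dual_zero : f (vzero X) = k0.
Proof. rewrite <- (vscale_0 (vzero X)), dual_scale. ring. Qed.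
End Dual.


Lemma dual_list_bound (fs : list (X -> K)) : Forall in_dual fs ->
  exists M, 0 < M /\ Forall (fun f => forall v, kabs (f v) <= M * vnorm v) fs.
Proof.
  induction 1 as [|f fs Hf _ IH].
  - exists 1. split; [lra| constructor].
  - destruct IH as [M [HM HF]]. destruct Hf as [_ [_ [M1 HM1]]].
    set (M' := Rmax M (Rmax M1 1)).
    assert (HMM : M <= M') by apply Rmax_l.
    assert (HM1' : M1 <= M') by (eapply Rle_trans; [apply Rmax_l|apply Rmax_r]).
    exists M'. split; [lra|]. constructor.
    + intro v. eapply Rle_trans; [apply HM1|]. apply Rmult_le_compat_r; auto. apply vnorm_nonneg.
    + eapply Forall_impl; [|exact HF]. simpl. intros g Hg v. eapply Rle_trans; [apply Hg|].
      apply Rmult_le_compat_r; auto. apply vnorm_nonneg.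
Qed.

Lemma kabs_sub_tri a b d : kabs (kadd a (kopp b)) <= kabs (kadd a (kopp d)) + kabs (kadd d (kopp b)).
Proof.
  replace (kadd a (kopp b)) with (kadd (kadd a (kopp d)) (kadd d (kopp b))) by ring.
  apply kabs_add.
Qed.

Lemma ncl_wcl (A : X -> Prop) y : norm_closure (weak_closure A) y -> weak_closure A y.
Proof.
  intros Hy fs eps Hfs Heps.
  destruct (dual_list_bound fs Hfs) as [M [HM HF]].
  destruct (Hy (eps / (2 * M))) as [a [Ha Hay]].
  { apply Rdiv_lt_0_compat; lra. }
  destruct (Ha fs (eps/2) Hfs ltac:(lra)) as [b [Hb Hba]].
  exists b. split; auto.
  rewrite Forall_forall in *. intros f Hin.
  specialize (Hba f Hin). specialize (HF f Hin).
  assert (Hd : in_dual f) by auto.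
  eapply Rle_lt_trans; [apply (kabs_sub_tri _ _ (f a))|].
  assert (kabs (kadd (f a) (kopp (f y))) < eps / 2).
  { rewrite <- dual_sub by auto. eapply Rle_lt_trans; [apply HF|].
    apply Rmult_lt_compat_l with (r := M) in Hay; auto.
    replace (M * (eps / (2 * M))) with (eps/2) in Hay by (field; lra). lra. }
  lra.
Qed.


Lemma kabs_pos a : a <> k0 -> 0 < kabs a.
Proof.
  intro H. destruct (kabs_nonneg c a) as [H'|H']; auto. exfalso. apply H.
  apply kabs_eq0. auto.
Qed.

Lemma kabs_inv a : a <> k0 -> kabs (kinv a) = / kabs a.
Proof.
  intro H. pose proof (kabs_pos a H).
  assert (E : kabs (kinv a) * kabs a = 1).
  { rewrite <- kabs_mul. replace (kmul (kinv a) a) with k1 by (field; auto). apply kabs1. }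
  apply (Rmult_eq_reg_r (kabs a)); [rewrite E; field; lra | lra].
Qed.

Variable xs : nat -> X.
Variable u : X -> K.
Hypothesis Hu : in_dual u.
Definition Omega (y : X) : Prop := exists (z : K) (n : nat), y = vscale z (xs n).
Definition Omega1 (y : X) : Prop := Omega y /\ u y = k1.

Lemma wcl_scale y t : weak_closure Omega y -> t <> k0 -> weak_closure Omega (vscale (kinv t) y).
Proof.
  intros Hy Ht fs eps Hfs Heps.
  pose proof (kabs_pos t Ht) as Hpt.
  destruct (Hy fs (eps * kabs t) Hfs ltac:(nra)) as [a [[z [n Ha]] HF]].
  exists (vscale (kinv t) a). split.
  - exists (kmul (kinv t) z), n. rewrite Ha, vscale_assoc. reflexivity.
  - rewrite Forall_forall in *. intros f Hin. specialize (HF f Hin).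
    assert (Hd : in_dual f) by auto.
    rewrite !dual_scale by auto.
    replace (kadd (kmul (kinv t) (f a)) (kopp (kmul (kinv t) (f y))))
      with (kmul (kinv t) (kadd (f a) (kopp (f y)))) by ring.
    rewrite kabs_mul, kabs_inv by auto.
    apply Rmult_lt_compat_l with (r := / kabs t) in HF; [|apply Rinv_0_lt_compat; auto].
    replace (/ kabs t * (eps * kabs t)) with eps in HF by (field; lra). auto.
Qed.

Lemma wcl_norm1 y : weak_closure Omega y -> u y = k1 -> weak_closure Omega1 y.
Proof.
  intros Hy Huy fs eps Hfs Heps.
  destruct (dual_list_bound fs Hfs) as [M [HM HF]].
  set (B := M * vnorm y).
  assert (HB : 0 <= B) by (unfold B; apply Rmult_le_pos; [lra|apply vnorm_nonneg]).
  set (d := Rmin (1/2) (eps / (2 * (1 + B)))).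
  assert (Hd1 : d <= 1/2) by apply Rmin_l.
  assert (Hd2 : d <= eps / (2 * (1 + B))) by apply Rmin_r.
  assert (Hd0 : 0 < d).
  { apply Rmin_glb_lt; [lra|]. apply Rdiv_lt_0_compat; lra. }
  assert (Hd3 : 2 * d * (1 + B) <= eps).
  { apply Rmult_le_compat_r with (r := 2 * (1 + B)) in Hd2; [|lra].
    replace (eps / (2 * (1 + B)) * (2 * (1 + B))) with eps in Hd2 by (field; lra). lra. }
  destruct (Hy (u :: fs) d (Forall_cons _ Hu Hfs) Hd0) as [a' [[z [n Ha']] HF']].
  inversion HF' as [|? ? Hua Hrest]; subst.
  rewrite Huy in Hua.
  set (w := u (vscale z (xs n))) in *.
  assert (Hw1 : kabs (kadd k1 (kopp w)) < d).
  { replace (kadd k1 (kopp w)) with (kopp (kadd w (kopp k1))) by ring. rewrite kabs_opp. auto. }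
  assert (Hw : 1/2 <= kabs w).
  { pose proof (kabs_add c w (kadd k1 (kopp w))) as T.
    replace (kadd w (kadd k1 (kopp w))) with k1 in T by ring. rewrite kabs1 in T. lra. }
  assert (Hw0 : w <> k0).
  { intro E. rewrite E, kabs0 in Hw. lra. }
  assert (Hwi : kabs (kinv w) <= 2).
  { rewrite kabs_inv by auto. rewrite <- (Rinv_inv 2). apply Rinv_le_contravar; lra. }
  exists (vscale (kinv w) (vscale z (xs n))). split.
  - split.
    + exists (kmul (kinv w) z), n. rewrite vscale_assoc. reflexivity.
    + rewrite dual_scale by auto. fold w. field. auto.
  - rewrite Forall_forall in *. intros f Hin.
    assert (Hdf : in_dual f) by auto.
    specialize (HF f Hin y). fold B in HF.
    assert (HP := Hrest f Hin).
    rewrite dual_scale by auto.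
    set (fa := f (vscale z (xs n))) in *.
    replace (kadd (kmul (kinv w) fa) (kopp (f y)))
      with (kmul (kinv w) (kadd (kadd fa (kopp (f y))) (kmul (kadd k1 (kopp w)) (f y))))
      by (field; auto).
    rewrite kabs_mul.
    pose proof (kabs_add c (kadd fa (kopp (f y))) (kmul (kadd k1 (kopp w)) (f y))) as T.
    rewrite kabs_mul in T.
    pose proof (kabs_nonneg c (kadd k1 (kopp w))).
    pose proof (kabs_nonneg c (f y)).
    pose proof (kabs_nonneg c (kinv w)).
    pose proof (kabs_nonneg c (kadd fa (kopp (f y)))).
    set (P := kabs (kadd fa (kopp (f y)))) in *.
    set (Q := kabs (kadd k1 (kopp w))) in *.
    set (F := kabs (f y)) in *.
    set (I := kabs (kinv w)) in *.
    set (S := kabs (kadd (kadd fa (kopp (f y))) (kmul (kadd k1 (kopp w)) (f y)))) in *.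
    assert (Q * F <= d * B) by (apply Rmult_le_compat; lra).
    assert (S < d * (1 + B)) by lra.
    assert (I * S <= 2 * S) by (apply Rmult_le_compat_r; [pose proof (kabs_nonneg c (kadd (kadd fa (kopp (f y))) (kmul (kadd k1 (kopp w)) (f y)))); unfold S; lra | lra]).
    lra.
Qed.


Lemma wcl_mono (A B : X -> Prop) y : (forall a, A a -> B a) -> weak_closure A y -> weak_closure B y.
Proof.
  intros HAB Hy fs eps Hfs Heps. destruct (Hy fs eps Hfs Heps) as [a [Ha H]].
  exists a; auto.
Qed.

Lemma k1_neq_k0 : k1 <> k0.
Proof. exact (F_1_neq_0 (K_field c)). Qed.

Variable k : X.
Hypothesis Huk : u k = k0.
Hypothesis Hk : k <> vzero X.

Definition ws (n : nat) : X :=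
  if excluded_middle_informative (u (xs n) = k0) then vscale (ofR c (INR n)) k
  else vscale (kinv (u (xs n))) (xs n).

Lemma Omega1_ws a : Omega1 a -> exists n, a = ws n.
Proof.
  intros [[z [n Ha]] Hua]. exists n. subst a.
  rewrite dual_scale in Hua by auto.
  unfold ws. destruct (excluded_middle_informative (u (xs n) = k0)) as [E|E].
  - exfalso. rewrite E in Hua. apply k1_neq_k0. rewrite <- Hua. ring.
  - f_equal. replace z with (kmul z (kmul (u (xs n)) (kinv (u (xs n))))) by (field; auto).
    replace (kmul z (kmul (u (xs n)) (kinv (u (xs n)))))
      with (kmul (kmul z (u (xs n))) (kinv (u (xs n)))) by ring.
    rewrite Hua. ring.
Qed.

Lemma vnorm_pos (v : X) : v <> vzero X -> 0 < vnorm v.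
Proof.
  intro H. destruct (vnorm_nonneg _ _ v) as [|E]; auto. exfalso. apply H.
  apply vnorm_eq0. auto.
Qed.

Hypothesis Hbig : exists (C : R) (N : nat), (1 <= N)%nat /\ forall n, (N <= n)%nat ->
            kabs (u (xs n)) <= C * (vnorm (xs n) / INR n).

Lemma ws_growth : exists (C : R) (N : nat), forall n, (N <= n)%nat -> INR n <= C * vnorm (ws n).
Proof.
  destruct Hbig as [C [N [HN HC]]].
  pose proof (vnorm_pos k Hk) as Hkp.
  exists (Rmax C (/ vnorm k)), N. intros n Hn.
  assert (Hnp : 0 < INR n) by (apply lt_0_INR; lia).
  unfold ws. destruct (excluded_middle_informative (u (xs n) = k0)) as [E|E].
  - rewrite vnorm_scale, kabs_ofR, Rabs_pos_eq by lra.
    assert (/ vnorm k <= Rmax C (/ vnorm k)) by apply Rmax_r.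
    apply Rle_trans with (/ vnorm k * (INR n * vnorm k)).
    + right. field. lra.
    + apply Rmult_le_compat_r; auto. apply Rmult_le_pos; lra.
  - rewrite vnorm_scale, kabs_inv by auto.
    pose proof (kabs_pos _ E) as Hw.
    specialize (HC n Hn).
    assert (C <= Rmax C (/ vnorm k)) by apply Rmax_l.
    pose proof (vnorm_nonneg _ _ (xs n)).
    apply Rle_trans with (C * (/ kabs (u (xs n)) * vnorm (xs n))).
    + apply Rmult_le_compat_r with (r := INR n / kabs (u (xs n))) in HC;
        [| apply Rlt_le, Rdiv_lt_0_compat; auto].
      replace (kabs (u (xs n)) * (INR n / kabs (u (xs n)))) with (INR n) in HC by (field; lra).
      replace (C * (vnorm (xs n) / INR n) * (INR n / kabs (u (xs n))))
        with (C * (/ kabs (u (xs n)) * vnorm (xs n))) in HC by (field; lra).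
      auto.
    + apply Rmult_le_compat_r; auto. apply Rmult_le_pos; auto. left; apply Rinv_0_lt_compat; auto.
Qed.

Hypothesis HY : in_class_Y X.

Lemma key y : weak_closure Omega y -> u y <> k0 -> Omega y.
Proof.
  intros Hy Hy0.
  set (t := u y) in *.
  assert (H1 : weak_closure Omega (vscale (kinv t) y)) by (apply wcl_scale; auto).
  assert (H2 : u (vscale (kinv t) y) = k1) by (rewrite dual_scale by auto; fold t; field; auto).
  pose proof (wcl_norm1 _ H1 H2) as H3.
  apply (wcl_mono _ (fun v => exists n, v = ws n)) in H3; [|apply Omega1_ws].
  destruct (HY ws ws_growth _ H3) as [n Hn].
  unfold ws in Hn. destruct (excluded_middle_informative (u (xs n) = k0)) as [E|E].
  - exfalso. rewrite Hn, dual_scale, Huk in H2 by auto. apply k1_neq_k0. rewrite <- H2. ring.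
  - exists (kmul t (kinv (u (xs n)))), n.
    rewrite <- vscale_assoc, <- Hn, vscale_assoc.
    replace (kmul t (kinv t)) with k1 by (field; auto). rewrite vscale_1. reflexivity.
Qed.


Lemma vadd_cancel_l (y a b : X) : vadd y a = vadd y b -> a = b.
Proof.
  intro H.
  assert (E : forall v, vadd (vopp y) (vadd y v) = v).
  { intro v. rewrite vadd_assoc, (vadd_comm _ X (vopp y) y), vadd_opp. apply vadd_0l. }
  rewrite <- (E a), <- (E b), H. reflexivity.
Qed.

Lemma sub_shift (y v x : X) : vadd (vadd y v) (vopp x) = vadd (vadd y (vopp x)) v.
Proof. rewrite <- !vadd_assoc, (vadd_comm _ X v (vopp x)). reflexivity. Qed.

Lemma kmul_neq0 a b : a <> k0 -> b <> k0 -> kmul a b <> k0.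
Proof.
  intros Ha Hb E. apply Hb. replace b with (kmul (kinv a) (kmul a b)) by (field; auto).
  rewrite E. ring.
Qed.

Lemma ofR_neq0 r : r <> 0 -> ofR c r <> k0.
Proof.
  intros Hr E. apply Hr. pose proof (kabs_ofR c r) as H. rewrite E, kabs0 in H.
  destruct (Rcase_abs r); [rewrite Rabs_left in H|rewrite Rabs_right in H]; lra.
Qed.

Hypothesis Hu0 : exists x : X, u x <> k0.

Lemma no_ball : ~ exists (x0 : X) (r : R), 0 < r /\
   forall y : X, vnorm (vadd y (vopp x0)) < r -> weak_closure Omega y.
Proof.
  intros [x0 [r [Hr Hball]]].
  assert (Hy0 : exists y0, vnorm (vadd y0 (vopp x0)) < r /\ u y0 <> k0).
  { destruct (excluded_middle_informative (u x0 = k0)) as [E|E].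
    - destruct Hu0 as [e He].
      assert (He0 : e <> vzero X) by (intro Z; apply He; rewrite Z; apply dual_zero; auto).
      pose proof (vnorm_pos e He0) as Hep.
      set (rho := r / (2 * vnorm e)).
      assert (Hrho : 0 < rho) by (apply Rdiv_lt_0_compat; lra).
      exists (vadd x0 (vscale (ofR c rho) e)). split.
      + rewrite sub_shift, vadd_opp, vadd_0l, vnorm_scale, kabs_ofR, Rabs_pos_eq by lra.
        unfold rho. replace (r / (2 * vnorm e) * vnorm e) with (r/2) by (field; lra). lra.
      + rewrite dual_add, dual_scale, E by auto.
        replace (kadd k0 (kmul (ofR c rho) (u e))) with (kmul (ofR c rho) (u e)) by ring.
        apply kmul_neq0; auto. apply ofR_neq0. lra.
    - exists x0. split; auto. rewrite vsub_self. auto. }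
  destruct Hy0 as [y0 [Hy0r Hy0u]].
  set (r' := r - vnorm (vadd y0 (vopp x0))).
  assert (Hr' : 0 < r') by (unfold r'; lra).
  pose proof (vnorm_pos k Hk) as Hkp.
  set (k' := vscale (ofR c (r' / (2 * vnorm k))) k).
  assert (Hk'n : vnorm k' = r' / 2).
  { unfold k'. rewrite vnorm_scale, kabs_ofR, Rabs_pos_eq.
    - field. lra.
    - apply Rlt_le, Rdiv_lt_0_compat; lra. }
  assert (Hk'u : u k' = k0) by (unfold k'; rewrite dual_scale, Huk by auto; ring).
  set (p := fun s => vadd y0 (vscale (ofR c s) k')).
  assert (Hpu : forall s, u (p s) = u y0).
  { intro s. unfold p. rewrite dual_add, dual_scale, Hk'u by auto. ring. }
  assert (Hpin : forall s, -1 <= s <= 1 -> Omega (p s)).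
  { intros s Hs. apply key; [| rewrite Hpu; auto]. apply Hball.
    unfold p. rewrite sub_shift. eapply Rle_lt_trans; [apply vnorm_triangle|].
    rewrite vnorm_scale, kabs_ofR, Hk'n.
    assert (Rabs s <= 1) by (apply Rabs_le; lra).
    assert (Rabs s * (r'/2) <= r'/2).
    { rewrite <- (Rmult_1_l (r'/2)) at 2. apply Rmult_le_compat_r; lra. }
    unfold r' in *. lra. }
  assert (Huniq : forall n s s' z z', p s = vscale z (xs n) -> p s' = vscale z' (xs n) -> s = s').
  { intros n s s' z z' E1 E2.
    assert (U1 : u y0 = kmul z (u (xs n))) by (rewrite <- (Hpu s), E1, dual_scale; auto).
    assert (U2 : u y0 = kmul z' (u (xs n))) by (rewrite <- (Hpu s'), E2, dual_scale; auto).
    assert (Hxn : u (xs n) <> k0) by (intro Z; apply Hy0u; rewrite U1, Z; ring).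
    assert (Ez : z = z').
    { replace z with (kmul (kmul z (u (xs n))) (kinv (u (xs n)))) by (field; auto).
      rewrite <- U1, U2. field. auto. }
    subst z'. rewrite <- E2 in E1. unfold p in E1. apply vadd_cancel_l in E1.
    assert (E3 : vadd (vscale (ofR c s) k') (vopp (vscale (ofR c s') k')) = vzero X)
      by (rewrite E1; apply vadd_opp).
    rewrite vopp_scale, vscale_assoc, <- vscale_adds in E3.
    apply (f_equal vnorm) in E3. rewrite vnorm_scale, vnorm0, Hk'n in E3.
    replace (kadd (ofR c s) (kmul (kopp k1) (ofR c s'))) with (kadd (ofR c s) (kopp (ofR c s'))) in E3 by ring.
    rewrite kabs_ofR_sub in E3.
    assert (Rabs (s - s') = 0) by (apply Rmult_integral in E3; destruct E3; lra).
    destruct (Rcase_abs (s - s')); [rewrite Rabs_left in H|rewrite Rabs_right in H]; lra. }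
  set (g := fun n => epsilon (inhabits 0) (fun s => -1 <= s <= 1 /\ exists z, p s = vscale z (xs n))).
  destruct (avoid g) as [x [Hx Hgx]].
  destruct (Hpin x Hx) as [z [n Hzn]].
  apply (Hgx n).
  assert (Hs : -1 <= g n <= 1 /\ exists z, p (g n) = vscale z (xs n)).
  { unfold g. apply epsilon_spec. exists x. split; eauto. }
  destruct Hs as [_ [z' Hz']].
  eapply Huniq; eauto.
Qed.


Lemma exists_ker : dim_gt1 X -> exists k0' : X, u k0' = k0 /\ k0' <> vzero X.
Proof.
  intros [x1 [x2 Hind]].
  destruct (excluded_middle_informative (u x1 = k0)) as [E|E].
  - exists x1. split; auto. intro Z. apply k1_neq_k0.
    apply (Hind k1 k0). rewrite Z, vscale_zero, vscale_0, vadd_0. reflexivity.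
  - exists (vadd (vscale (kopp (u x2)) x1) (vscale (u x1) x2)). split.
    + rewrite dual_add, !dual_scale by auto. ring.
    + intro Z. apply E. apply (Hind _ _ Z).
Qed.

End Main.

Theorem lemma2p3 (complex : bool) (X : Banach (Kfield complex))
  (HY : in_class_Y X) (Hdim : dim_gt1 X)
  (xs : nat -> X) (u : X -> Kfield complex)
  (Hu : in_dual u) (Hu0 : exists x : X, u x <> s0 (Kfield complex))
  (Hbig : exists (C : R) (N : nat), (1 <= N)%nat /\ forall n, (N <= n)%nat ->
            sabs (Kfield complex) (u (xs n)) <= C * (vnorm (xs n) / INR n)) :
  let Omega := fun y : X => exists (z : Kfield complex) (n : nat), y = vscale z (xs n) in
  norm_nowhere_dense (weak_closure Omega) /\
  ~ (forall x : X, weak_closure Omega x).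
Proof.
  intros Om.
  destruct (exists_ker complex X u Hu Hdim) as [k [Huk Hk]].
  assert (P1 : norm_nowhere_dense (weak_closure Om)).
  { intros [x0 [r [Hr H]]].
    apply (no_ball complex X xs u Hu k Huk Hk Hbig HY Hu0).
    exists x0, r. split; auto. intros y Hy. apply ncl_wcl. apply H. auto. }
  split; auto.
  intro Hall. apply P1. exists (vzero X), 1. split; [lra|].
  intros y _ eps Heps. exists y. split; auto. rewrite vsub_self. auto.
Qed.
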